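(* Let $C_m=\frac{1}{m+1}\binom{2m}{m}$ denote the Catalan numbers, and for integers $n\ge0$ define $$E(n)=\frac{\sum_{j=0}^{\lfloor n/2\rfloor}C_{n-2j}\,C_{2j}}{\sum_{\ell=0}^{n}C_{n-\ell}\,C_{\ell}}.$$ Then (i) the sequence $m\mapsto E(2m)$, $m\ge0$, is decreasing; (ii) $E(2m+1)=\tfrac12$ for all $m\ge0$. Consequently, for all $m\ge4$, $E(m)\le\max\{E(4),\tfrac12\}=E(4)$. *)

(* Defs.v *)
From mathcomp Require Import all_boot all_order all_algebra.
Set Implicit Arguments. Unset Strict Implicit. Unset Printing Implicit Defensive.
Import Order.TTheory GRing.Theory Num.Theory.
Local Open Scope ring_scope.

Definition catalan (m : nat) : rat := ('C(2 * m, m))%:R / (m.+1)%:R.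

Definition E (n : nat) : rat :=
  (\sum_(j < n./2.+1) catalan (n - 2 * j) * catalan (2 * j))
  / (\sum_(l < n.+1) catalan (n - l) * catalan l).

(* Main.v *)
Require Import Defs.
From mathcomp Require Import all_boot all_order all_algebra.
From mathcomp Require Import zify lra ring.
Import Order.TTheory GRing.Theory Num.Theory.
Local Open Scope ring_scope.

Lemma nat_nz (n : nat) (x : rat) : x = n.+1%:R -> x != 0.
Proof. by move=> ->; rewrite pnatr_eq0. Qed.

Lemma catalanE n : catalan n = (2 * n)`!%:R / (n`!%:R * (n.+1)`!%:R).
Proof.
have h := bin_fact (leq_addl n n).
rewrite addnK addnn -mul2n in h.
rewrite /catalan -h factS natrM natrM natrM.
have h1 : (n`!)%:R != 0 :> rat by rewrite pnatr_eq0 -lt0n fact_gt0.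
field. rewrite h1 /=. apply: (@nat_nz n); ring.
Qed.

Lemma catalanS n : catalan n.+1 = (4 * n + 2)%:R / (n + 2)%:R * catalan n.
Proof.
rewrite !catalanE.
have -> : (2 * n.+1 = (2 * n).+2)%N by lia.
rewrite !factS.
have h1 : (n`!)%:R != 0 :> rat by rewrite pnatr_eq0 -lt0n fact_gt0.
have h2 : ((2*n)`!)%:R != 0 :> rat by rewrite pnatr_eq0 -lt0n fact_gt0.
field. rewrite h1 (@nat_nz n) /=; last by ring. apply: (@nat_nz n.+1); ring.
Qed.

Lemma catalan_gt0 n : 0 < catalan n.
Proof. by rewrite /catalan divr_gt0 // ltr0n bin_gt0 leq_pmull. Qed.

Lemma catalan0 : catalan 0 = 1.
Proof. by rewrite /catalan bin0 divr1. Qed.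

Lemma sum_rev (F : nat -> rat) n :
  \sum_(j < n.+1) F j = \sum_(j < n.+1) F (n - j)%N.
Proof.
rewrite -(big_mkord xpredT) big_rev_mkord subn0.
by apply: eq_bigr => i _; rewrite subSS.
Qed.

Definition G (w : nat -> rat) n :=
  \sum_(k < n.+1) w k * catalan k * catalan (n - k).

Lemma G_ext w1 w2 n : (forall k, (k <= n)%N -> w1 k = w2 k) -> G w1 n = G w2 n.
Proof. by move=> h; apply: eq_bigr => i _; rewrite h // -ltnS. Qed.

Lemma G_add w1 w2 n : G (fun k => w1 k + w2 k) n = G w1 n + G w2 n.
Proof. by rewrite /G -big_split; apply: eq_bigr => i _ /=; ring. Qed.

Lemma G_scale a w n : G (fun k => a * w k) n = a * G w n.
Proof. by rewrite /G mulr_sumr; apply: eq_bigr => i _ /=; ring. Qed.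

Lemma G_rev w n : G w n = G (fun k => w (n - k)%N) n.
Proof.
rewrite /G (sum_rev (fun k => w k * catalan k * catalan (n - k))); apply: eq_bigr => i _.
have hi : (i <= n)%N by rewrite -ltnS.
rewrite subKn //; ring.
Qed.

Lemma G_shift w n :
  G (fun k => k.+1%:R * w k) n.+1 =
  w 0%N * catalan n.+1 + G (fun j => (4 * j + 2)%:R * w j.+1) n.
Proof.
rewrite /G big_ord_recl /= catalan0 subn0; congr (_ + _); first ring.
apply: eq_bigr => i _; rewrite /bump /= add1n subSS catalanS.
field. apply: (@nat_nz i.+1); ring.
Qed.

Lemma G_rshift w n :
  G (fun k => (n.+2 - k)%:R * w k) n.+1 =
  w n.+1 * catalan n.+1 + G (fun j => (4 * (n - j) + 2)%:R * w j) n.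
Proof.
rewrite G_rev.
rewrite (G_ext _ (fun k => k.+1%:R * w (n.+1 - k)%N)); last first.
  by move=> k hk; congr (_%:R * _); lia.
rewrite G_shift subn0; congr (_ + _).
rewrite G_rev; apply: G_ext => k hk.
by congr (_ * w _); lia.
Qed.

Definition D n := G (fun _ => 1) n.

Lemma D_rec n : (n.+3)%:R * D n.+1 = 2 * catalan n.+1 + 4 * (n.+1)%:R * D n.
Proof.
rewrite /D -G_scale.
rewrite (G_ext _ (fun k => k.+1%:R * 1 + (n.+2 - k)%:R * 1)); last first.
  move=> k hk; have -> : (n.+3 = k.+1 + (n.+2 - k))%N by lia.
  by rewrite natrD; ring.
rewrite (G_add (fun k => k.+1%:R * 1) (fun k => (n.+2-k)%:R * 1)) G_shift G_rshift.
rewrite -addrA (addrCA (G _ n)) addrA.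
rewrite -(G_add (fun j => (4 * j + 2)%:R * 1) (fun j => (4 * (n - j) + 2)%:R * 1)) -G_scale.
rewrite (G_ext (fun j => _ + _) (fun j => 4 * (n.+1)%:R * 1)); first ring.
move=> k hk; have -> : (4 * (n - k) + 2 = 4 * n.+1 - (4 * k + 2))%N by lia.
rewrite natrB; last by lia. rewrite natrM; ring.
Qed.

Lemma D_closed n : D n = catalan n.+1.
Proof.
elim: n => [|n IH].
  by rewrite /D /G big_ord1 /= catalan0 catalanS catalan0; field.
apply: (@mulfI _ (n.+3)%:R); first by rewrite pnatr_eq0.
rewrite D_rec IH (catalanS n.+1); field; apply: (@nat_nz n.+2); ring.
Qed.

Definition sgn (k : nat) : rat := (-1) ^+ k.
Definition P n := G sgn n.

Lemma sgnS k : sgn k.+1 = - sgn k.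
Proof. by rewrite /sgn exprS mulN1r. Qed.

Lemma sgn_even m : sgn (2 * m) = 1.
Proof. by rewrite /sgn exprM sqrrN !expr1n. Qed.

Lemma G_lin2 a b w1 w2 n :
  G (fun k => a * w1 k + b * w2 k) n = a * G w1 n + b * G w2 n.
Proof.
rewrite (G_add (fun k => a * w1 k) (fun k => b * w2 k)).
by rewrite (G_scale a w1) (G_scale b w2).
Qed.

Lemma P_rec m :
  ((2 * m).+4)%:R * P (2 * m).+2 =
  2 * catalan (2 * m).+2 - 8 * catalan (2 * m).+1 + 16 * ((2 * m).+1)%:R * P (2 * m).
Proof.
set n := (2 * m)%N.
have e1 := G_shift sgn n.+1.
have e2 := G_rshift sgn n.+1.
have e3 := G_shift sgn n.
have e4 := G_rshift sgn n.
have f1 : (n.+4)%:R * P n.+2 =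
   G (fun k => k.+1%:R * sgn k) n.+2 + G (fun k => (n.+3 - k)%:R * sgn k) n.+2.
  rewrite -(G_add (fun k => k.+1%:R * sgn k) (fun k => (n.+3 - k)%:R * sgn k)).
  rewrite /P -G_scale; apply: G_ext => k hk.
  have -> : (n.+4 = k.+1 + (n.+3 - k))%N by lia.
  rewrite natrD; ring.
have f2 : G (fun j => (4 * j + 2)%:R * sgn j.+1) n.+1
        + G (fun j => (4 * (n.+1 - j) + 2)%:R * sgn j) n.+1
        = -4 * G (fun k => k.+1%:R * sgn k) n.+1
          + 4 * G (fun k => (n.+2 - k)%:R * sgn k) n.+1.
  rewrite -(G_add (fun j => (4 * j + 2)%:R * sgn j.+1) (fun j => (4 * (n.+1 - j) + 2)%:R * sgn j)).
  rewrite -(G_lin2 (-4) 4); apply: G_ext => k hk.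
  rewrite sgnS.
  have -> : (4 * (n.+1 - k) + 2 = 4 * (n.+2 - k) - 2)%N by lia.
  rewrite natrB; last by lia.
  rewrite natrM natrB; last by lia. ring.
have f3 : -4 * G (fun j => (4 * j + 2)%:R * sgn j.+1) n
          + 4 * G (fun j => (4 * (n - j) + 2)%:R * sgn j) n
          = 16 * (n.+1)%:R * P n.
  rewrite -(G_lin2 (-4) 4) /P -G_scale; apply: G_ext => k hk.
  rewrite sgnS.
  have -> : (4 * (n - k) + 2 = (4 * n.+1) - (4 * k + 2))%N by lia.
  rewrite natrB; last by lia.
  ring.
rewrite f1 e1 e2 -addrA (addrCA (G _ n.+1)) addrA -addrA f2 e3 e4 -f3.
have s0 : sgn 0 = 1 by [].
have s2 : sgn n.+2 = 1 by rewrite !sgnS sgn_even opprK.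
have s1 : sgn n.+1 = -1 by rewrite sgnS sgn_even.
rewrite s0 s1 s2; ring.
Qed.

Lemma P_closed m : P (2 * m) = 2 * 4 ^+ m * catalan m - catalan (2 * m).+1.
Proof.
elim: m => [|m IH].
  by rewrite /P /G big_ord1 /= catalan0 catalanS catalan0 /sgn expr0; field.
have -> : (2 * m.+1 = (2 * m).+2)%N by lia.
apply: (@mulfI _ ((2 * m).+4)%:R); first by rewrite pnatr_eq0.
rewrite P_rec IH (catalanS (2 * m).+2) (catalanS (2 * m).+1) (catalanS m).
rewrite exprS.
field; have := ler0n rat m; move=> hm.
by rewrite !lt0r_neq0 //; lra.
Qed.

Lemma split_even (f : nat -> rat) m :
  \sum_(l < (2 * m).+1) f l = \sum_(j < m.+1) f (2 * j)%N + \sum_(j < m) f (2 * j).+1.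
Proof.
elim: m => [|m IH]; first by rewrite big_ord1 big_ord1 big_ord0 addr0.
have -> : (2 * m.+1 = (2 * m).+2)%N by lia.
rewrite big_ord_recr big_ord_recr /= IH.
rewrite [\sum_(j < m.+2) _]big_ord_recr [\sum_(j < m.+1) f (2 * j).+1]big_ord_recr /=.
have -> : (2 * m.+1 = (2 * m).+2)%N by lia.
set a := \sum_(j < m.+1) _. set b := \sum_(j < m) _. 
by rewrite -!addrA; congr (_ + _); rewrite [RHS]addrC -addrA.
Qed.

Lemma split_odd (f : nat -> rat) m :
  \sum_(l < (2 * m).+2) f l = \sum_(j < m.+1) f (2 * j)%N + \sum_(j < m.+1) f (2 * j).+1.
Proof.
rewrite big_ord_recr /= split_even [\sum_(j < m.+1) f (2 * j).+1]big_ord_recr /=.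
by rewrite addrA.
Qed.

Lemma sum_pos (f : nat -> rat) n : (forall k, 0 < f k) -> 0 < \sum_(j < n.+1) f j.
Proof.
move=> h; rewrite big_ord_recl.
have h1 := h 0%N.
have h2 : 0 <= \sum_(i < n) f (bump 0 i) by apply: sumr_ge0 => i _; apply: ltW.
lra.
Qed.

Lemma E_odd m : E (2 * m + 1) = 1 / 2.
Proof.
rewrite /E.
have -> : ((2 * m + 1)./2 = m)%N by rewrite mul2n addnC; exact: (half_bit_double m true).
rewrite addn1 (split_odd (fun l => catalan ((2 * m).+1 - l) * catalan l)).
set A := \sum_(j < m.+1) _.
have hB : \sum_(j < m.+1) catalan ((2 * m).+1 - (2 * j).+1) * catalan (2 * j).+1 = A.
  rewrite (sum_rev (fun j => catalan ((2 * m).+1 - (2 * j).+1) * catalan (2 * j).+1)).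
  rewrite /A; apply: eq_bigr => j _.
  have hj : (j <= m)%N by rewrite -ltnS.
  rewrite mulrC; congr (catalan _ * catalan _); lia.
rewrite hB.
have hA : 0 < A by apply: (sum_pos (fun j => catalan ((2 * m).+1 - 2 * j) * catalan (2 * j))) => k; rewrite mulr_gt0 // catalan_gt0.
field; rewrite lt0r_neq0 //; lra.
Qed.

Lemma E_even m : E (2 * m) = 4 ^+ m * catalan m / catalan (2 * m).+1.
Proof.
rewrite /E.
have -> : ((2 * m)./2 = m)%N by rewrite mul2n doubleK.
set A := \sum_(j < m.+1) _.
set B := \sum_(j < m) catalan (2 * j).+1 * catalan (2 * m - (2 * j).+1).
have hD : D (2 * m) = A + B.
  rewrite /D /G (split_even (fun l => 1 * catalan l * catalan (2 * m - l))).
  congr (_ + _); first (rewrite /A; apply: eq_bigr => j _; ring).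
  by apply: eq_bigr => j _; ring.
have hP : P (2 * m) = A - B.
  rewrite /P /G (split_even (fun l => sgn l * catalan l * catalan (2 * m - l))).
  rewrite /B -sumrN.
  congr (_ + _); first (rewrite /A; apply: eq_bigr => j _; rewrite sgn_even; ring).
  by apply: eq_bigr => j _; rewrite sgnS sgn_even; ring.
have hden : \sum_(l < (2 * m).+1) catalan (2 * m - l) * catalan l = catalan (2 * m).+1.
  by rewrite -D_closed /D /G; apply: eq_bigr => l _; ring.
rewrite hden.
have -> : A = (D (2 * m) + P (2 * m)) / 2 by rewrite hD hP; field.
rewrite D_closed P_closed; field.
exact: lt0r_neq0 (catalan_gt0 _).
Qed.

Lemma E_dec m : E (2 * m.+1) < E (2 * m).
Proof.
rewrite !E_even.
have -> : (2 * m.+1 = (2 * m).+2)%N by lia.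
rewrite (catalanS (2 * m).+2) (catalanS (2 * m).+1) (catalanS m) exprS.
have ha := catalan_gt0 m.
have hb := catalan_gt0 (2 * m).+1.
have hm := ler0n rat m.
have h4 : 0 < 4 ^+ m :> rat by rewrite exprn_gt0.
pose r : rat := (4 * (2 * m + 1)%:R * (2 * m + 3)%:R) / ((4 * m + 3)%:R * (4 * m + 5)%:R).
have e : 4 * 4 ^+ m * ((4 * m + 2)%:R / (m + 2)%:R * catalan m) /
  ((4 * (2 * m).+2 + 2)%:R / ((2 * m).+2 + 2)%:R *
   ((4 * (2 * m).+1 + 2)%:R / ((2 * m).+1 + 2)%:R * catalan (2 * m).+1))
  = 4 ^+ m * catalan m / catalan (2 * m).+1 * r.
  rewrite /r; field.
  by rewrite !lt0r_neq0 //; lra.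
rewrite e.
have hx : 0 < 4 ^+ m * catalan m / catalan (2 * m).+1 by rewrite divr_gt0 // mulr_gt0.
rewrite gtr_pMr //.
rewrite /r ltr_pdivrMr; last first.
  by rewrite mulr_gt0 // ltr0n addn_gt0 orbT.
rewrite mul1r.
have : (4 * m + 3)%:R * (4 * m + 5)%:R - 4 * (2 * m + 1)%:R * (2 * m + 3)%:R = 3 :> rat by ring.
lra.
Qed.

Lemma E4 : E 4 = 16 / 21.
Proof.
rewrite (E_even 2).
have -> : ((2 * 2).+1 = 5)%N by [].
rewrite !catalanS catalan0.
by field.
Qed.

Lemma E_dec_gen k d : E (2 * (k + d)) <= E (2 * k).
Proof.
elim: d => [|d IH]; first by rewrite addn0.
apply: le_trans IH; rewrite addnS; apply: ltW; exact: E_dec.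
Qed.

Theorem mainTheorem4 :
  (forall m : nat, E (2 * m.+1) < E (2 * m)) /\
  (forall m : nat, E (2 * m + 1) = 1 / 2) /\
  (forall m : nat, (4 <= m)%N ->
     E m <= Num.max (E 4) (1 / 2) /\ Num.max (E 4) (1 / 2) = E 4).
Proof.
have hmax : Num.max (E 4) (1 / 2) = E 4.
  by rewrite E4 max_l //; lra.
split; first exact: E_dec.
split; first exact: E_odd.
move=> m hm; split => //; rewrite hmax.
have := odd_double_half m.
case: (odd m) => /= hm2.
  rewrite -hm2 -mul2n addnC E_odd E4; lra.
rewrite -hm2 add0n -mul2n.
have -> : (m./2 = 2 + (m./2 - 2))%N by lia.
have -> : (4 = 2 * 2)%N by [].
exact: E_dec_gen.
Qed.
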